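(* Fix an $\mathrm{HNN}_k$ architecture with parameter vector $\Theta\in\mathbb{R}^m$, and denote by $v_\Theta$ the corresponding network function. Let $\Omega\subset\mathbb{R}^d$ be a domain of finite measure. There exists a set $\mathcal N\subset\mathbb{R}^m$ such that: 1. if $\Theta_0\notin\mathcal N$, then for every sequence $\{\Theta_n\}_{n\in\mathbb{N}}\subset\mathbb{R}^m$ converging to $\Theta_0$, $v_{\Theta_n}\to v_{\Theta_0}$ in $L^2(\Omega)$; 2. if $\Omega$ is bounded, each $\Theta\in\mathcal N$ admits $\Theta'\notin\mathcal N$ satisfying $v_\Theta\equiv v_{\Theta'}$ in $\Omega$. Moreover, $\mathcal N$ is a finite union of subspaces of $\mathbb{R}^m$, each of dimension $m-d$ (in particular, $\mathcal N$ has Lebesgue measure zero).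
   Context: $\mathrm{HNN}_k$ networks are functions $v(x)=\Theta^k\circ\sigma\circ\Theta^{k-1}\circ\sigma\circ\cdots\circ\Theta^1\circ\sigma_s\circ\Theta^0(x)$, $x\in\mathbb{R}^d$, with affine maps $\Theta^j:\mathbb{R}^{n_j}\to\mathbb{R}^{n_{j+1}}$ ($n_0=d$, $n_{k+1}=1$) whose coefficients form the parameter vector $\Theta\in\mathbb{R}^m$, $\sigma=\mathrm{ReLU}$, and $\sigma_s=H$ the Heaviside function ($H(t)=1$ for $t\ge0$, $0$ for $t<0$); activations are applied componentwise. In particular the first layer is $x\mapsto(H(a_1\cdot x+b_1),\dots,H(a_\ell\cdot x+b_\ell))$ with $a_i\in\mathbb{R}^d$, $b_i\in\mathbb{R}$. *)

(* Defs.v *)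
From HB Require Import structures.
From mathcomp Require Import all_boot all_order all_algebra.
From mathcomp Require Import all_classical all_reals all_analysis.
Set Implicit Arguments. Unset Strict Implicit. Unset Printing Implicit Defensive.
Import Order.TTheory GRing.Theory Num.Theory.
Import numFieldNormedType.Exports.
Local Open Scope ring_scope.

Definition heaviside {R : realType} (t : R) : R := if 0 <= t then 1 else 0.
Definition relu {R : realType} (t : R) : R := Num.max t 0.

(* i-th coordinate of a row vector, seen as a nat-indexed sequence (0 beyond the length) *)
Definition coord_of {R : realType} (n : nat) (v : 'rV[R]_n) (p : nat) : R :=
  if (insub p : option 'I_n) is Some i then v 0 i else 0.

(* Input dimension d, hidden widths ns = [:: n_1; ...; n_k] (k = size ns), and
   n_{k+1} = 1.  The affine map Theta^j : R^{n_j} -> R^{n_{j+1}} has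
   n_{j+1} * (n_j + 1) coefficients.  Parameters are stored consecutively,
   layer by layer (Theta^0, Theta^1, ..., Theta^k); inside layer j, for each
   output neuron i the n_j weights come first, then the bias. *)
Fixpoint nparams_from (a : nat) (ws : seq nat) : nat :=
  match ws with
  | [::] => 0
  | b :: ws' => b * a.+1 + nparams_from b ws'
  end.

Definition hnn_nparams (d : nat) (ns : seq nat) : nat :=
  nparams_from d (ns ++ [:: 1]).

Definition affine_layer {R : realType} (P : nat -> R) (o a : nat)
    (x : nat -> R) (i : nat) : R :=
  \sum_(l < a) P (o + i * a.+1 + l) * x l + P (o + i * a.+1 + a).

Fixpoint relu_tail {R : realType} (P : nat -> R) (a : nat) (ws : seq nat)
    (o : nat) (x : nat -> R) : R :=
  match ws with
  | [::] => affine_layer P o a x 0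
  | b :: ws' => relu_tail P b ws' (o + b * a.+1)
                  (fun i => relu (affine_layer P o a x i))
  end.

(* v(x) = Theta^k o sigma o ... o Theta^1 o H o Theta^0 (x) *)
Definition hnn_eval {R : realType} (d : nat) (ns : seq nat) (P : nat -> R)
    (x : nat -> R) : R :=
  match ns with
  | [::] => 0
  | n1 :: ns' => relu_tail P n1 ns' (n1 * d.+1)
                   (fun i => heaviside (affine_layer P 0 d x i))
  end.

Definition hnn {R : realType} (d : nat) (ns : seq nat) (m : nat)
    (Theta : 'rV[R]_m) (x : 'rV[R]_d) : R :=
  hnn_eval d ns (coord_of Theta) (coord_of x).

(* Iterated one-dimensional Lebesgue integrals; for nonnegative Borel
   integrands this is the Lebesgue integral on R^d (Tonelli). *)
Fixpoint iter_lebesgue_integral {R : realType} (d : nat)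
    (F : (nat -> R) -> \bar R) : \bar R :=
  match d with
  | 0 => F (fun _ => 0)
  | d'.+1 => (\int[@lebesgue_measure R]_t
               iter_lebesgue_integral d'
                 (fun x => F (fun i => if i is j.+1 then x j else t)))%E
  end.

Definition lebesgue_integral_Rd {R : realType} (d : nat)
    (g : 'rV[R]_d -> \bar R) : \bar R :=
  iter_lebesgue_integral d (fun x => g (\row_(i < d) x (val i))).

Definition lebesgue_measure_Rd {R : realType} (d : nat) (A : set 'rV[R]_d) : \bar R :=
  lebesgue_integral_Rd (fun x => (\1_A x)%:E).

Definition L2dist2 {R : realType} (d : nat) (Omega : set 'rV[R]_d)
    (f g : 'rV[R]_d -> R) : \bar R :=
  lebesgue_integral_Rd (fun x => (\1_Omega x * (f x - g x) ^+ 2)%:E).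

Arguments hnn {R} d ns {m} Theta x.

(* Main.v *)
Require Import Defs.
From HB Require Import structures.
From mathcomp Require Import all_boot all_order all_algebra.
From mathcomp Require Import all_classical all_reals all_analysis.
From mathcomp Require Import measurable_realfun.
From mathcomp Require Import ring lra.
Set Implicit Arguments. Unset Strict Implicit. Unset Printing Implicit Defensive.
Import Order.TTheory GRing.Theory Num.Theory.
Import numFieldNormedType.Exports.
Local Open Scope classical_set_scope.
Local Open Scope ring_scope.
From mathcomp Require Import zify.
Section PS.
Local Open Scope ereal_scope.
Context d1 d2 (T1 : measurableType d1) (T2 : measurableType d2) (R : realType).
Variable m1 : {sigma_finite_measure set T1 -> \bar R}.
Variable m2 : {sigma_finite_measure set T2 -> \bar R}.
Definition pm := (m1 \x m2).
HB.instance Definition _ := Measure.on pm.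
Lemma pm_sf : sigma_finite setT pm.
Proof.
have /sigma_finiteP[F [TF ndF Foo]] := sigma_finiteT m1.
have /sigma_finiteP[G [TG ndG Goo]] := sigma_finiteT m2.
exists (fun n => F n `*` G n).
 rewrite -setXTT TF TG predeqE => -[x y]; split.
    move=> [/= [n _ Fnx] [k _ Gky]]; exists (maxn n k) => //; split.
    - by move: x Fnx; exact/subsetPset/ndF/leq_maxl.
    - by move: y Gky; exact/subsetPset/ndG/leq_maxr.
  by move=> [n _ []/= ? ?]; split; exists n.
move=> k; have [? ?] := Foo k; have [? ?] := Goo k.
split; first exact: measurableX.
by rewrite /pm product_measure1E// lte_mul_pinfty// ge0_fin_numE.
Qed.
HB.instance Definition _ := Measure_isSigmaFinite.Build _ _ _ pm pm_sf.
End PS.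

Record MS (R : realType) := { disp : measure_display; car : measurableType disp;
  mu : {sigma_finite_measure set car -> \bar R} }.

Fixpoint Rn (R : realType) (d : nat) : MS R :=
  match d with
  | 0 => @Build_MS R _ _ (\d_(0:R)%R : {sigma_finite_measure set _ -> \bar R})%E
  | d'.+1 => @Build_MS R _ _ (pm (@lebesgue_measure R) (mu (Rn R d')) : {sigma_finite_measure set _ -> \bar R})
  end.

Fixpoint enc (R : realType) (d : nat) : car (Rn R d) -> nat -> R :=
  match d return car (Rn R d) -> nat -> R with
  | 0 => fun _ _ => 0
  | d'.+1 => fun p i => if i is j.+1 then @enc R d' p.2 j else p.1
  end.

Lemma iterE (R : realType) (d : nat) (F : (nat -> R) -> \bar R) :
  (forall x, (0 <= F x)%E) -> measurable_fun [set: car (Rn R d)] (fun p => F (@enc R d p) : \bar R) ->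
  iter_lebesgue_integral d F = (\int[mu (Rn R d)]_p F (enc p))%E.
Proof.
elim: d F => [|d IH] F F0 mF /=.
  rewrite integral_dirac //= diracT mul1e //.
rewrite /pm fubini_tonelli1 //.
apply: eq_integral => t _.
rewrite /fubini_F.
rewrite IH //.
by apply: (measurable_fun_pair2 t mF).
Qed.

Section Meas.
Variable R : realType.

Lemma mf_enc (d : nat) (l : nat) :
  measurable_fun [set: car (Rn R d)] (fun p => @enc R d p l).
Proof.
elim: d l => [|d IH] l /=.
  exact: measurable_cst.
case: l => [|l].
  exact: measurable_fst.
apply: (measurableT_comp (f := fun q => @enc R d q l) (IH l)).
exact: measurable_snd.
Qed.

Lemma heavisideE (t : R) : heaviside t = \1_(`[0, +oo[%classic) t.
Proof.
rewrite /heaviside indicE; case: ifP => h.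
  by rewrite mem_set //= in_itv /= h.
by rewrite memNset //= in_itv /= h.
Qed.

Lemma mf_heaviside : measurable_fun [set: R] (@heaviside R).
Proof.
rewrite (_ : heaviside = \1_(`[0, +oo[%classic)); last first.
  by apply/funext => t; rewrite heavisideE.
apply: measurable_indic; exact: measurable_itv.
Qed.

Lemma mf_relu : measurable_fun [set: R] (@relu R).
Proof.
rewrite (_ : relu = (id \max cst 0)); last by apply/funext.
apply: measurable_maxr => //; exact: measurable_cst.
Qed.

Context dT (T : measurableType dT).

Lemma mf_affine (x : T -> nat -> R) (P : nat -> R) o a i :
  (forall l, measurable_fun [set: T] (fun t => x t l)) ->
  measurable_fun [set: T] (fun t => affine_layer P o a (x t) i).
Proof.
move=> mx; rewrite /affine_layer.
apply: (@measurable_funD _ _ _ _ (fun t => \sum_(l < a) P (o + i * a.+1 + l) * x t l)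
  (fun=> P (o + i * a.+1 + a))); last exact: measurable_cst.
apply: measurable_sum => l.
by apply: (@measurable_funM _ _ _ _ (fun=> P (o + i * a.+1 + l)) (fun t => x t l)).
Qed.

Lemma mf_relu_tail (P : nat -> R) ws :
  forall a o (x : T -> nat -> R),
  (forall l, measurable_fun [set: T] (fun t => x t l)) ->
  measurable_fun [set: T] (fun t => relu_tail P a ws o (x t)).
Proof.
elim: ws => [|b ws IH] a o x mx /=.
  exact: mf_affine.
apply: IH => l.
apply: (measurableT_comp (f := @relu R) mf_relu).
exact: mf_affine.
Qed.

Lemma mf_hnn_eval d ns (P : nat -> R) (x : T -> nat -> R) :
  (forall l, measurable_fun [set: T] (fun t => x t l)) ->
  measurable_fun [set: T] (fun t => hnn_eval d ns P (x t)).
Proof.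
move=> mx; case: ns => [|n1 ns] /=; first exact: measurable_cst.
apply: mf_relu_tail => l.
apply: (measurableT_comp (f := @heaviside R) mf_heaviside).
exact: mf_affine.
Qed.

End Meas.

Definition penc (R : realType) (d : nat) (p : car (Rn R d)) : 'rV[R]_d :=
  \row_(i < d) @enc R d p (val i).

Lemma coord_penc (R : realType) d (p : car (Rn R d)) l :
  coord_of (penc p) l = if (l < d)%N then enc p l else 0.
Proof.
rewrite /coord_of; case: insubP => [i ->|] /=.
  by move=> <-; rewrite mxE.
by move/negbTE => ->.
Qed.

Lemma mf_coord_penc (R : realType) d l :
  measurable_fun [set: car (Rn R d)] (fun p => coord_of (@penc R d p) l).
Proof.
under eq_fun do rewrite coord_penc.
case: (l < d)%N; [exact: mf_enc | exact: measurable_cst].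
Qed.

Section Hyper.
Variable R : realType.
Local Open Scope ereal_scope.

Definition hyp d (a : nat -> R) (b : R) : set (car (Rn R d)) :=
  [set p | (\sum_(l < d) a l * @enc R d p l + b = 0)%R].

Lemma mf_lin d (a : nat -> R) (b : R) :
  measurable_fun [set: car (Rn R d)] (fun p => \sum_(l < d) a l * @enc R d p l + b)%R.
Proof.
apply: (@measurable_funD _ _ _ _ (fun p => \sum_(l < d) a l * @enc R d p l)%R (fun=> b));
  last exact: measurable_cst.
apply: measurable_sum => l.
by apply: (@measurable_funM _ _ _ _ (fun=> a l) (fun p => @enc R d p l)); [exact: measurable_cst|exact: mf_enc].
Qed.

Lemma measurable_hyp d a b : measurable (@hyp d a b).
Proof.
have := @mf_lin d a b measurableT [set 0%R] (measurable_set1 _).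
by rewrite setTI.
Qed.

Lemma hyp_null d (a : nat -> R) (b : R) :
  (exists2 l, (l < d)%N & a l != 0%R) -> mu (Rn R d) (@hyp d a b) = 0.
Proof.
elim: d a b => [|d IH] a b [l ld al]; first by [].
rewrite /= /pm /product_measure1 /=.
have secE t : xsection (@hyp d.+1 a b) t =
    @hyp d (fun l => a l.+1) (a 0%N * t + b)%R.
  have E y : (\sum_(l < d.+1) a l * @enc R d.+1 (t, y) l =
      a 0%N * t + \sum_(l < d) a l.+1 * @enc R d y l)%R.
    by rewrite big_ord_recl /=.
  apply/seteqP; split => y; rewrite /xsection /hyp /= inE /= E;
    by rewrite addrA (addrC (\sum_(l < d) _)%R).
under eq_integral do rewrite secE.
have [[l' l'd al']|nex] := pselect (exists2 l, (l < d)%N & a l.+1 != 0%R).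
  apply: integral0_eq => t _ /=; apply: IH; by exists l'.
have a0 : a 0%N != 0%R.
  case: l ld al => // l ld al; exfalso; apply: nex; by exists l.
have a'0 : forall l, (l < d)%N -> a l.+1 = 0%R.
  move=> k kd; apply/eqP; apply: contrapT => /negP h; apply: nex; by exists k.
set t0 := (- b / a 0%N)%R.
rewrite -(@integral_setD1 _ _ t0).
- apply: integral0_eq => t [_ /= tt0].
  rewrite (_ : @hyp d _ _ = set0) ?measure0 //.
  apply/seteqP; split => // y; rewrite /hyp /=.
  rewrite big1 ?add0r; last by move=> i _; rewrite a'0 // mul0r.
  move=> /eqP; rewrite addrC addr_eq0 => /eqP h; apply: tt0.
  by rewrite /t0 h opprK mulrC mulrA (mulVf a0) mul1r.
- exact: measurableD.
- apply: (measurable_funS measurableT) => //.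
  rewrite (_ : (fun t => _) = (mu (Rn R d) \o xsection (@hyp d.+1 a b))); last first.
    by apply/funext => t; rewrite /= secE.
  exact: (measurable_fun_xsection (mu (Rn R d)) (measurable_hyp d.+1 a b)).
Qed.

End Hyper.

Section OpenMeas.
Variable R : realType.

Definition box d (q : seq rat) (r : rat) : set (car (Rn R d)) :=
  \bigcap_(l : nat) (if (l < d)%N then
     [set p | `|@enc R d p l - ratr (nth 0 q l)| < ratr r] else setT).

Lemma measurable_box d q r : measurable (@box d q r).
Proof.
apply: bigcapT_measurable => l.
case: (l < d)%N; last exact: measurableT.
have := @mf_enc R d l measurableT (`](ratr (nth 0 q l) - ratr r), (ratr (nth 0 q l) + ratr r)[%classic)
  (measurable_itv _).
rewrite setTI; congr measurable.
by apply/seteqP; split => p /=; rewrite in_itv /= ltr_distl.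
Qed.

End OpenMeas.

Section OpenMeas2.
Variable R : realType.

Lemma measurable_penc_open d (U : set 'rV[R]_d) :
  open U -> measurable (@penc R d @^-1` U).
Proof.
move=> oU.
pose F := fun k : seq rat * rat =>
  if pselect (@box R d k.1 k.2 `<=` @penc R d @^-1` U) is left _ then @box R d k.1 k.2 else set0.
have -> : @penc R d @^-1` U = \bigcup_k F k.
  apply/seteqP; split; last first.
    by move=> p [k _]; rewrite /F; case: pselect => // h /h.
  move=> p Up.
  have : nbhs (@penc R d p) U by apply: open_nbhs_nbhs; split.
  case/nbhs_ballP => e /= e0 be.
  have qs : forall l, exists q : rat, ratr q \in `](@enc R d p l - e / 4), (enc p l + e / 4)[.
    move=> l; apply: rat_in_itvoo.
    have e4 : 0 < e / 4 by rewrite divr_gt0.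
    by rewrite ltrBlDr -addrA ltrDl addr_gt0.
  have [qf hq] := choice qs.
  have [r hr] : exists r : rat, ratr r \in `](e / 4), (e / 2)[.
    apply: rat_in_itvoo.
    by rewrite ltr_pM2l // ltf_pV2 ?posrE // ltr_nat.
  move: hr; rewrite in_itv /= => /andP [r1 r2].
  have hq' l : `|enc p l - ratr (qf l)| < e / 4.
    by rewrite ltr_distlC; move: (hq l); rewrite in_itv /=.
  have Bp : @box R d (mkseq qf d) r p.
    move=> l _; case: ifP => // ld /=.
    by rewrite nth_mkseq //; apply: lt_trans (hq' l) r1.
  have BU : @box R d (mkseq qf d) r `<=` @penc R d @^-1` U.
    move=> y By; apply: be.
    split => // i j; rewrite !mxE /ball /=.
    have := By (val j) I; rewrite ltn_ord /= nth_mkseq // => hy.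
    have := hq' (val j) => hp.
    rewrite (_ : enc p _ - enc y _ = (enc p (val j) - ratr (qf (val j))) +
       (ratr (qf (val j)) - enc y (val j))); last by rewrite addrA subrK.
    apply: (le_lt_trans (ler_normD _ _)).
    rewrite (distrC (ratr _)); lra.
  exists (mkseq qf d, r) => //.
  by rewrite /F; case: pselect => //= h; exfalso; apply: h.
apply: countable_bigcupT_measurable; first exact: countableP.
by move=> k; rewrite /F; case: pselect => _; [exact: measurable_box|exact: measurable0].
Qed.

End OpenMeas2.

Section Cvg.
Variable R : realType.

Lemma cvg_sum_ord (a : nat) (u : nat -> nat -> R) (l : nat -> R) :
  (forall i, (i < a)%N -> (fun n => u n i) @ \oo --> l i) ->
  (fun n => \sum_(i < a) u n i) @ \oo --> \sum_(i < a) l i.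
Proof.
elim: a => [|a IH] H.
  rewrite big_ord0 (_ : (fun n => _) = fun=> 0); first exact: cvg_cst.
  by apply/funext => n; rewrite big_ord0.
rewrite big_ord_recr (_ : (fun n => _) = fun n => \sum_(i < a) u n i + u n a); last first.
  by apply/funext => n; rewrite big_ord_recr.
apply: cvgD; last exact: H.
by apply: IH => i ia; apply: H; rewrite ltnS ltnW.
Qed.

Lemma reluE (t : R) : relu t = (t + `|t|) / 2.
Proof.
rewrite /relu /Num.max; case: ifP => h.
  by rewrite ltr0_norm //; lra.
by rewrite ger0_norm ?lerNgt ?h //; lra.
Qed.

Lemma relu_norm (t : R) : `|relu t| <= `|t|.
Proof.
rewrite /relu /Num.max; case: ifP => h //.
by rewrite normr0.
Qed.

Lemma cvg_relu (u : nat -> R) c : u @ \oo --> c ->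
  (fun n => relu (u n)) @ \oo --> relu c.
Proof.
move=> uc; rewrite reluE (_ : (fun n => _) = fun n => (u n + `|u n|) * 2^-1); last first.
  by apply/funext => n; rewrite reluE.
apply: cvgMl; apply: cvgD => //; exact: cvg_norm.
Qed.

Lemma cvg_heaviside (u : nat -> R) c : u @ \oo --> c -> c != 0 ->
  (fun n => heaviside (u n)) @ \oo --> heaviside c.
Proof.
move=> uc c0; apply: cvg_near_cst.
have [clt|cgt|ce] := ltgtP c 0; last by rewrite ce eqxx in c0.
  apply: filterS (cvgr_lt c uc 0 clt) => n un.
  by rewrite /heaviside !ifF //; apply/negbTE; rewrite -ltNge.
apply: filterS (cvgr_gt c uc 0 cgt) => n un.
by rewrite /heaviside !ifT // ltW.
Qed.

Variables (Pn : nat -> nat -> R) (P : nat -> R).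
Hypothesis PnP : forall k, (fun n => Pn n k) @ \oo --> P k.

Lemma cvg_affine o a (xn : nat -> nat -> R) x i :
  (forall l, (l < a)%N -> (fun n => xn n l) @ \oo --> x l) ->
  (fun n => affine_layer (Pn n) o a (xn n) i) @ \oo --> affine_layer P o a x i.
Proof.
move=> H; rewrite /affine_layer; apply: cvgD; last exact: PnP.
apply: (@cvg_sum_ord a (fun n l => Pn n (o + i * a.+1 + l) * xn n l)
  (fun l => P (o + i * a.+1 + l) * x l)) => l la.
by apply: cvgM; [exact: PnP | exact: H].
Qed.

Lemma cvg_relu_tail ws : forall a o (xn : nat -> nat -> R) x,
  (forall l, (l < a)%N -> (fun n => xn n l) @ \oo --> x l) ->
  (fun n => relu_tail (Pn n) a ws o (xn n)) @ \oo --> relu_tail P a ws o x.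
Proof.
elim: ws => [|b ws IH] a o xn x H /=; first exact: cvg_affine.
apply: IH => l lb.
apply: cvg_relu; exact: cvg_affine.
Qed.

End Cvg.

Section Bnd.
Variable R : realType.

Lemma bnd_affine (K M : R) P o a (x : nat -> R) i :
  (forall k, `|P k| <= K) -> (forall l, (l < a)%N -> `|x l| <= M) ->
  `|affine_layer P o a x i| <= K * M *+ a + K.
Proof.
move=> HP Hx; rewrite /affine_layer.
apply: (le_trans (ler_normD _ _)); apply: lerD => //.
apply: (le_trans (ler_norm_sum _ _ _)).
apply: le_trans (_ : \sum_(l < a) K * M <= _); last by rewrite sumr_const card_ord.
apply: ler_sum => l _; rewrite normrM.
by apply: ler_pM => //; apply: Hx.
Qed.

Lemma bnd_relu_tail (K : R) ws : forall a (M : R), exists B : R,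
  forall P o (x : nat -> R), (forall k, `|P k| <= K) ->
    (forall l, (l < a)%N -> `|x l| <= M) -> `|relu_tail P a ws o x| <= B.
Proof.
elim: ws => [|b ws IH] a M /=.
  by exists (K * M *+ a + K) => P o x HP Hx; exact: bnd_affine.
have [B HB] := IH b (K * M *+ a + K).
exists B => P o x HP Hx; apply: HB => // l lb.
apply: le_trans (relu_norm _) _; exact: bnd_affine.
Qed.

End Bnd.

Lemma indic_ge0 (R : realType) (T : Type) (A : set T) (x : T) : 0 <= \1_A x :> R.
Proof. by rewrite indicE ler0n. Qed.
Lemma indic_le1 (R : realType) (T : Type) (A : set T) (x : T) : \1_A x <= 1 :> R.
Proof. by rewrite indicE lern1 leq_b1. Qed.

Lemma entry_le_norm (R : realType) m (M : 'rV[R]_m) (i : 'I_m) : `|M 0 i| <= `|M|.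
Proof.
rewrite /Num.norm /= mx_normrE.
exact: (le_bigmax _ (fun ij : 'I_1 * 'I_m => `|M ij.1 ij.2|) (0, i)).
Qed.

Lemma entry_cvg (R : realType) m (u : nat -> 'rV[R]_m) (M : 'rV[R]_m) (i : 'I_m) :
  u @ \oo --> M -> (fun n => u n 0 i) @ \oo --> M 0 i.
Proof.
move=> /cvg_ballP H; apply/cvg_ballP => e e0.
by apply: filterS (H e e0) => n [_ /(_ 0 i)].
Qed.

Lemma coord_le_norm (R : realType) m (M : 'rV[R]_m) k : `|coord_of M k| <= `|M|.
Proof.
rewrite /coord_of; case: insubP => [i _ _|_]; first exact: entry_le_norm.
by rewrite normr0.
Qed.

Lemma heaviside_norm (R : realType) (t : R) : `|heaviside t| <= 1.
Proof. by rewrite /heaviside; case: ifP; rewrite ?normr1 ?normr0. Qed.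

Section Part1.
Variables (R : realType) (d n1 : nat) (ns' : seq nat) (m : nat) (Omega : set 'rV[R]_d).
Variables (Theta0 : 'rV[R]_m) (Thetas : nat -> 'rV[R]_m).
Hypothesis cv : Thetas @ \oo --> Theta0.

Lemma coord_cvg k : (fun n => coord_of (Thetas n) k) @ \oo --> coord_of Theta0 k.
Proof.
rewrite /coord_of; case: insubP => [i _ _|_]; [exact: entry_cvg | exact: cvg_cst].
Qed.

Lemma param_bound : exists K : R, forall k, `|coord_of Theta0 k| <= K /\
   forall n, `|coord_of (Thetas n) k| <= K.
Proof.
have := cvg_seq_bounded (cvgP _ cv).
move=> [M [Mr HM]].
exists (Num.max (M + 1) `|Theta0|) => k; split.
  by apply: le_trans (coord_le_norm _ _) _; rewrite le_max lexx orbT.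
move=> n; apply: le_trans (coord_le_norm _ _) _.
rewrite le_max; apply/orP; left.
by apply: HM => //; rewrite ltrDl.
Qed.

End Part1.

Lemma affine_penc (R : realType) d m (Th : 'rV[R]_m) (p : car (Rn R d)) i :
  affine_layer (coord_of Th) 0 d (coord_of (@penc R d p)) i =
  \sum_(l < d) coord_of Th (i * d.+1 + l) * @enc R d p l + coord_of Th (i * d.+1 + d).
Proof.
rewrite /affine_layer; congr (_ + _).
by apply: eq_bigr => l _; rewrite coord_penc ltn_ord.
Qed.

Lemma mf_hnn (R : realType) d ns m (Th : 'rV[R]_m) :
  measurable_fun [set: car (Rn R d)] (fun p => hnn d ns Th (@penc R d p)).
Proof.
apply: (@mf_hnn_eval R _ _ d ns (coord_of Th) (fun p => coord_of (@penc R d p))).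
exact: mf_coord_penc.
Qed.

Lemma indic_penc (R : realType) d (Omega : set 'rV[R]_d) (p : car (Rn R d)) :
  \1_Omega (@penc R d p) = \1_(@penc R d @^-1` Omega) p :> R.
Proof. by []. Qed.

Section Part1b.
Variables (R : realType) (d n1 : nat) (ns' : seq nat) (m : nat) (Omega : set 'rV[R]_d).
Variables (Theta0 : 'rV[R]_m) (Thetas : nat -> 'rV[R]_m).
Hypothesis cv : Thetas @ \oo --> Theta0.
Hypothesis oO : open Omega.
Hypothesis finO : (lebesgue_measure_Rd Omega < +oo)%E.
Hypothesis nz : forall i, (i < n1)%N ->
  exists2 l, (l < d)%N & coord_of Theta0 (i * d.+1 + l) != 0.

Local Notation mu := (mu (Rn R d)).

Lemma part1_main :
  (fun n => L2dist2 Omega (hnn d (n1 :: ns') (Thetas n)) (hnn d (n1 :: ns') Theta0))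
    @ \oo --> 0%E.
Proof.
have [K HK] := param_bound cv.
have [B HB] := bnd_relu_tail K ns' n1 1.
have hB : forall Th : 'rV[R]_m, (forall k, `|coord_of Th k| <= K) ->
    forall x, `|hnn d (n1 :: ns') Th x| <= B.
  move=> Th HTh x; rewrite /hnn /=; apply: HB => // l _; exact: heaviside_norm.
pose A := @penc R d @^-1` Omega.
have mA : measurable A := measurable_penc_open oO.
pose v n p := hnn d (n1 :: ns') (Thetas n) (@penc R d p).
pose v0 p := hnn d (n1 :: ns') Theta0 (@penc R d p).
pose f_ n p := ((\1_A p * (v n p - v0 p) ^+ 2)%:E : \bar R).
have mv (Th : 'rV[R]_m) : measurable_fun [set: car (Rn R d)] (fun p => hnn d (n1 :: ns') Th (@penc R d p)).
  exact: mf_hnn.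
have mdiff n : measurable_fun [set: car (Rn R d)] (fun p => v n p - v0 p).
  exact: (measurable_funB (mv (Thetas n)) (mv Theta0)).
have mf_ n : measurable_fun [set: car (Rn R d)] (f_ n).
  apply/measurable_EFinP.
  apply: (@measurable_funM _ _ _ _ (\1_A) (fun p => (v n p - v0 p) ^+ 2)).
    exact: measurable_indic.
  exact: measurable_funX.
have f_ge0 n p : (0 <= f_ n p)%E.
  by rewrite lee_fin; apply: mulr_ge0; [exact: indic_ge0 | exact: sqr_ge0].
have L2E n : L2dist2 Omega (hnn d (n1 :: ns') (Thetas n)) (hnn d (n1 :: ns') Theta0) =
    (\int[mu]_p f_ n p)%E.
  rewrite /L2dist2 /lebesgue_integral_Rd iterE //; last exact: (mf_ n).
  move=> x; rewrite lee_fin; apply: mulr_ge0; [exact: indic_ge0 | exact: sqr_ge0].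
rewrite (eq_cvg _ _ L2E).
have muA : (mu A < +oo)%E.
  have E : lebesgue_measure_Rd Omega = mu A.
    rewrite /lebesgue_measure_Rd /lebesgue_integral_Rd iterE //.
    - transitivity (\int[mu]_p (\1_A p)%:E)%E; first by [].
      by rewrite integral_indic // setIT.
    - apply/measurable_EFinP; exact: (measurable_indic (R:=R) mA).
  by rewrite -E.
have intA : mu.-integrable [set: car (Rn R d)] (fun p => (\1_A p)%:E).
  apply/integrableP; split; first by apply/measurable_EFinP; exact: measurable_indic.
  under eq_integral do rewrite gee0_abs ?lee_fin ?indic_ge0 //.
  by rewrite integral_indic // setIT.
pose g p := (((2 * B) ^+ 2)%:E * (\1_A p)%:E)%E.
have ig : mu.-integrable [set: car (Rn R d)] g by exact: integrableZl.
have vB n p : `|v n p| <= B by apply: hB => k; case: (HK k) => _; apply.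
have v0B p : `|v0 p| <= B by apply: hB => k; case: (HK k).
have f_g : {ae mu, forall x n, [set: car (Rn R d)] x -> (`|f_ n x| <= g x)%E}.
  apply: aeW => p n _.
  rewrite /f_ /g -EFinM gee0_abs ?lee_fin; last first.
    by apply: mulr_ge0; [exact: indic_ge0 | exact: sqr_ge0].
  rewrite mulrC; apply: ler_wpM2r; first exact: indic_ge0.
  move: (vB n p) (v0B p); rewrite !ler_norml => /andP[h1 h2] /andP[h3 h4].
  nra.
pose Nset := \bigcup_k (if (k < n1)%N then
   @hyp R d (fun l => coord_of Theta0 (k * d.+1 + l)) (coord_of Theta0 (k * d.+1 + d))
   else set0).
have negN : mu.-negligible Nset.
  apply: negligible_bigcup => k; case: ifP => kn; last exact: negligible_set0.
  apply/negligibleP; first exact: measurable_hyp.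
  by apply: hyp_null; apply: nz.
have f_f : {ae mu, forall x, [set: car (Rn R d)] x -> f_ ^~ x @ \oo --> (cst 0%E x : \bar R)}.
  apply: (negligibleS _ negN) => p /= Hp.
  apply: contrapT => nN; apply: Hp => _.
  have vc : (fun n => v n p) @ \oo --> v0 p.
    rewrite /v /v0 /hnn /hnn_eval.
    apply: (cvg_relu_tail (Pn := fun n => coord_of (Thetas n)) (P := coord_of Theta0)).
      exact: coord_cvg.
    move=> i i_lt.
    apply: cvg_heaviside.
      apply: cvg_affine; first exact: coord_cvg.
      by move=> l _; exact: cvg_cst.
    apply/eqP => h; apply: nN; exists i => //; rewrite i_lt /hyp /=.
    by rewrite -affine_penc.
  have dc : (fun n => (v n p - v0 p) ^+ 2) @ \oo --> 0.
    have c1 : (fun n => v n p - v0 p) @ \oo --> 0.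
      rewrite -(subrr (v0 p)); apply: cvgB => //; exact: cvg_cst.
    rewrite (_ : (fun n => _) = (fun n => (v n p - v0 p) * (v n p - v0 p))); last first.
      by apply/funext => n; rewrite expr2.
    by rewrite -(mulr0 0); apply: cvgM.
  apply: cvg_EFin; first exact: nearW.
  rewrite /comp /f_ /= -(mulr0 (\1_A p)).
  by apply: cvgMr.
have := dominated_convergence measurableT mf_ (measurable_cst _) f_f ig f_g.
by case=> _ _; rewrite integral0.
Qed.

End Part1b.

Section VS.
Variable R : realType.

Lemma sum_sel (m : nat) (g : 'I_m -> R) (a : nat) :
  \sum_(k < m) g k * ((k : nat) == a)%:R = if (insub a : option 'I_m) is Some k then g k else 0.
Proof.
case: insubP => [k _ <-|ha] /=.
  rewrite (bigD1 k) //= eqxx mulr1 big1 ?addr0 // => j jk.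
  by rewrite val_eqE (negbTE jk) mulr0.
rewrite big1 // => j _.
case: eqP => [ja|]; last by rewrite mulr0.
by exfalso; move/negP: ha; apply; rewrite -ja ltn_ord.
Qed.

Definition selM (m d i : nat) : 'M[R]_(m, d) :=
  \matrix_(k < m, l < d) ((k : nat) == i * d.+1 + l)%:R.

Definition Vi (m d i : nat) : {vspace 'rV[R]_m} := lker (linfun (mulmxr (selM m d i))).

Lemma selM_coord m d i (Th : 'rV[R]_m) (l : 'I_d) :
  (Th *m selM m d i) 0 l = coord_of Th (i * d.+1 + l).
Proof.
rewrite mxE /coord_of.
rewrite (eq_bigr (fun k : 'I_m => Th 0 k * ((k : nat) == i * d.+1 + l)%:R)); last first.
  by move=> k _; rewrite mxE.
by rewrite sum_sel.
Qed.

Lemma memVi m d i (Th : 'rV[R]_m) :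
  (Th \in Vi m d i) <-> (forall l, (l < d)%N -> coord_of Th (i * d.+1 + l) = 0).
Proof.
rewrite /Vi memv_ker lfunE /=; split.
  move=> /eqP H l ld.
  by have := selM_coord i Th (Ordinal ld); rewrite H mxE.
move=> H; apply/eqP/rowP => l; rewrite selM_coord mxE; exact: H.
Qed.

Lemma dimVi m d i : (i.+1 * d.+1 <= m)%N -> \dim (Vi m d i) = (m - d)%N.
Proof.
move=> im.
have hid l : (l < d)%N -> (i * d.+1 + l < m)%N by move=> ld; lia.
rewrite /Vi; set f := linfun (mulmxr (selM m d i)).
have imgF : (f @: fullv)%VS = fullv.
  apply/eqP; rewrite eqEsubv subvf /=; apply/subvP => y _.
  pose Th : 'rV[R]_m := \row_(k < m) \sum_(l < d) y 0 l * ((l : nat) == (k - i * d.+1)%N)%:R *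
       ((i * d.+1 <= k)%N)%:R.
  have -> : y = f Th.
    rewrite lfunE /=; apply/rowP => l; rewrite selM_coord.
    rewrite /coord_of; case: insubP => [k _ kl|]; last by rewrite hid.
    rewrite mxE kl addKn leq_addr /=.
    under eq_bigr do rewrite mulr1.
    rewrite sum_sel; case: insubP => [l' _ e|]; last by rewrite ltn_ord.
    by congr (y 0 _); apply: val_inj.
  exact: memv_img (memvf _).
have := limg_ker_dim f fullv.
rewrite capfv imgF !dimvf /dim /= !mul1n => E.
by rewrite -[in RHS]E addnK.
Qed.

End VS.

Section Part2.
Variable R : realType.

Lemma affine_congr (P Q : nat -> R) o a (x y : nat -> R) i :
  (forall k, (o <= k)%N -> P k = Q k) -> (forall l, (l < a)%N -> x l = y l) ->
  affine_layer P o a x i = affine_layer Q o a y i.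
Proof.
move=> HP Hx; rewrite /affine_layer; congr (_ + _).
  apply: eq_bigr => l _; rewrite HP ?Hx //; lia.
apply: HP; lia.
Qed.

Lemma relu_tail_congr (P Q : nat -> R) ws : forall a o (x y : nat -> R),
  (forall k, (o <= k)%N -> P k = Q k) -> (forall l, (l < a)%N -> x l = y l) ->
  relu_tail P a ws o x = relu_tail Q a ws o y.
Proof.
elim: ws => [|b ws IH] a o x y HP Hx /=; first exact: affine_congr.
apply: IH => [k ok|l lb]; first by apply: HP; lia.
by congr relu; apply: affine_congr.
Qed.

Variables (d n1 : nat) (ns' : seq nat) (m : nat) (Omega : set 'rV[R]_d).
Variables (Th : 'rV[R]_m) (M : R).
Hypothesis d0 : (0 < d)%N.
Hypothesis n1m : (n1 * d.+1 <= m)%N.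
Hypothesis HM : forall x, Omega x -> `|x| <= M.

Let P := coord_of Th.
Let zero i := [forall l : 'I_d, P (i * d.+1 + l) == 0].
Let bp i := if 0 <= P (i * d.+1 + d) then M + 1 else - (M + 1).
Let P' k := if (k < n1 * d.+1)%N then
   (if zero (k %/ d.+1) then
      (if (k %% d.+1 == 0)%N then 1 else if (k %% d.+1 == d)%N then bp (k %/ d.+1) else 0)
    else P k)
  else P k.
Let Th' : 'rV[R]_m := \row_(k < m) P' k.

Let coordTh' k : coord_of Th' k = P' k.
Proof.
rewrite /coord_of; case: insubP => [k' _ <-|h]; first by rewrite mxE.
have hk : (m <= k)%N by rewrite leqNgt.
rewrite /P' ifF; last by apply/negbTE; rewrite -leqNgt; exact: leq_trans n1m hk.
by rewrite /P /coord_of insubN.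
Qed.

Let P'_idx i l : (i < n1)%N -> (l <= d)%N ->
  P' (i * d.+1 + l) = if zero i then (if (l == 0)%N then 1 else if (l == d)%N then bp i else 0)
                      else P (i * d.+1 + l).
Proof.
move=> i_lt ld; rewrite /P' ifT; last by nia.
have -> : ((i * d.+1 + l) %/ d.+1 = i)%N by rewrite divnMDl // divn_small ?addn0.
by have -> : ((i * d.+1 + l) %% d.+1 = l)%N by rewrite modnMDl modn_small.
Qed.

Let first_eq (x : 'rV[R]_d) i : Omega x -> (i < n1)%N ->
  heaviside (affine_layer P' 0 d (coord_of x) i) = heaviside (affine_layer P 0 d (coord_of x) i).
Proof.
move=> Ox i_lt; rewrite /affine_layer.
rewrite (eq_bigr (fun l : 'I_d => (if zero i then ((l : nat) == 0%N)%:R else P (i * d.+1 + l))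
   * coord_of x l)); last first.
  move=> l _; rewrite P'_idx //; last exact: ltnW.
  case: (zero i) => //; case: eqP => [->|_] //.
  by rewrite (ltn_eqF (ltn_ord l)).
rewrite P'_idx // eqxx (gtn_eqF d0).
case hz: (zero i) => //.
have -> : \sum_(l < d) P (i * d.+1 + l) * coord_of x l = 0.
  apply: big1 => l _; move/forallP: hz => /(_ l) /eqP ->; exact: mul0r.
rewrite add0r.
rewrite (eq_bigr (fun l : 'I_d => coord_of x l * ((l : nat) == 0%N)%:R)); last first.
  by move=> l _; rewrite mulrC.
rewrite sum_sel; case: insubP => [z _ z0|]; last by rewrite d0.
have hx : `|coord_of x z| <= M by apply: le_trans (coord_le_norm _ _) (HM Ox).
move: hx; rewrite ler_norml => /andP [h1 h2].
rewrite /bp /heaviside ?add0n; case hb: (0 <= P (i * d.+1 + d)).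
  by rewrite ifT //; lra.
rewrite ifF //; apply/negbTE; rewrite -ltNge; lra.
Qed.

Let nzTh' i : (i < n1)%N -> exists2 l, (l < d)%N & coord_of Th' (i * d.+1 + l) != 0.
Proof.
move=> i_lt; case hz: (zero i).
  exists 0%N => //; rewrite coordTh' P'_idx // hz eqxx; exact: oner_neq0.
move: (hz) => /negbT/forallPn [l hl].
exists l => //; rewrite coordTh' P'_idx //; last exact: ltnW.
by rewrite hz.
Qed.

Lemma part2_main : exists Th2 : 'rV[R]_m,
  (forall i, (i < n1)%N -> exists2 l, (l < d)%N & coord_of Th2 (i * d.+1 + l) != 0) /\
  forall x, Omega x -> hnn d (n1 :: ns') Th x = hnn d (n1 :: ns') Th2 x.
Proof.
exists Th'; split; first exact: nzTh'.
move=> x Ox; rewrite /hnn /hnn_eval.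
rewrite (_ : coord_of Th' = P'); last by apply/funext => k; exact: coordTh'.
apply: relu_tail_congr => [k kn|l ln].
  by rewrite /P' ifF //; apply/negbTE; rewrite -leqNgt.
by rewrite first_eq.
Qed.

End Part2.

Theorem mainTheorem16 (R : realType) (d : nat) (ns : seq nat) (m : nat)
    (Omega : set 'rV[R]_d) :
  (0 < d)%N -> ns != [::] -> all (fun n => 0 < n)%N ns ->
  m = hnn_nparams d ns ->
  open Omega -> connected Omega -> Omega !=set0 ->
  (lebesgue_measure_Rd Omega < +oo)%E ->
  exists N : set 'rV[R]_m,
    [/\ (forall Theta0 : 'rV[R]_m, ~ N Theta0 ->
           forall Thetas : nat -> 'rV[R]_m, Thetas @ \oo --> Theta0 ->
             (fun n => L2dist2 Omega (hnn d ns (Thetas n)) (hnn d ns Theta0))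
               @ \oo --> 0%E),
        (bounded_set Omega ->
           forall Theta : 'rV[R]_m, N Theta ->
             exists Theta' : 'rV[R]_m, ~ N Theta' /\
               forall x, Omega x -> hnn d ns Theta x = hnn d ns Theta' x) &
        exists s : seq {vspace 'rV[R]_m},
          all (fun V => \dim V == (m - d)%N) s /\
          N = [set Theta : 'rV[R]_m | has (fun V : {vspace 'rV[R]_m} => Theta \in V) s]].
Proof.
move=> d0 nsn0 allpos mE oO cO neO finO.
case: ns nsn0 allpos mE => [//|n1 ns'] _ allpos mE.
have n1m : (n1 * d.+1 <= m)%N by rewrite mE /hnn_nparams /=; exact: leq_addr.
pose s := [seq Vi R m d i | i <- iota 0 n1].
exists [set Th : 'rV[R]_m | has (fun V : {vspace 'rV[R]_m} => Th \in V) s]; split.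
- move=> Th0 nN Thetas cv; apply: (part1_main ns' cv oO finO) => i i_lt.
  apply: contrapT => H; apply: nN => /=.
  apply/hasP; exists (Vi R m d i); first by apply/mapP; exists i; rewrite ?mem_iota.
  apply/memVi => l ld; apply: contrapT => hne; apply: H; exists l => //; exact/eqP.
- move=> bO Th _.
  have [M0 [_ HM0]] := bO.
  have HM : forall x, Omega x -> `|x| <= M0 + 1.
    by apply: HM0; rewrite ltrDl.
  have [Th2 [nz2 eq2]] := part2_main ns' Th d0 n1m HM.
  exists Th2; split => //.
  move=> /= /hasP [V /mapP [i ii ->]] /memVi H.
  rewrite mem_iota add0n in ii; move/andP: ii => [_ ii].
  have [l ld hl] := nz2 i ii.
  by rewrite H ?eqxx in hl.
- exists s; split => //.
  apply/allP => V /mapP [i ii ->]; apply/eqP; apply: dimVi.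
  rewrite mem_iota add0n in ii; move/andP: ii => [_ ii].
  by nia.
Qed.
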